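(* Let $P_0,P_1$ be the bivectors on the region of $\mathbb{R}^{2n}$ (coordinates $(q,p)$, $q_i$ pairwise distinct) $$P_0=\sum_{i,j=1}^np_ie^{-|q_i-q_j|}\partial_{p_i}\wedge\partial_{q_j}-\sum_{i<j}\mathrm{sign}(q_i-q_j)p_ip_je^{-|q_i-q_j|}\partial_{p_i}\wedge\partial_{p_j}+\sum_{i<j}\mathrm{sign}(q_i-q_j)(e^{-|q_i-q_j|}-1)\partial_{q_i}\wedge\partial_{q_j},\quad P_1=\sum_{i=1}^n\partial_{p_i}\wedge\partial_{q_i},$$ viewed as maps from 1-forms to vector fields, and let $S=P_1^{-1}\circ P_0$ be the recursion operator on 1-forms. Let $H_0=\sum_ip_i$, $H_1=\frac12\sum_{i,j}p_ip_je^{-|q_i-q_j|}$, and define $H_{i+1}$ for $i\ge1$ by $dH_{i+1}=S^i(dH_1)$. Then each $H_i$ is a polynomial function of $p$ of degree $i+1$.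
   Context: For a bivector $P=\sum P^{ij}\partial_{x_i}\wedge\partial_{x_j}$, the associated map sends a 1-form $\alpha$ to $P(\alpha,\cdot)$. The pair $(P_0,P_1)$ is a bi-Hamiltonian structure with $P_0(dH_0,\cdot)=P_1(dH_1,\cdot)$, so the 1-forms $S^i(dH_1)$ are closed and the $H_i$ are first integrals (defined up to additive constants). *)

(* Defs.v *)
From HB Require Import structures.
From mathcomp Require Import all_boot all_order all_algebra.
From mathcomp Require Import all_classical all_reals all_analysis.
Set Implicit Arguments. Unset Strict Implicit. Unset Printing Implicit Defensive.
Import Order.TTheory GRing.Theory Num.Theory.
Local Open Scope ring_scope.
Local Open Scope classical_set_scope.

Section Peakon.
Variable R : realType.
Variable n : nat.

(* A point of R^{2n} is a column vector; the first n coordinates are q, the last n are p. *)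
Definition qc (x : 'cV[R]_(n + n)) (i : 'I_n) : R := x (lshift n i) 0.
Definition pc (x : 'cV[R]_(n + n)) (i : 'I_n) : R := x (rshift n i) 0.

Definition region : set 'cV[R]_(n + n) :=
  [set x | forall i j : 'I_n, i != j -> qc x i != qc x j].

(* Coefficient matrix P^{ab} of a bivector  P = sum_{a,b} P^{ab} d_a /\ d_b
   (indices a : q-coordinates via inl, p-coordinates via inr). *)
Definition P0 (x : 'cV[R]_(n + n)) : 'M[R]_(n + n) :=
  \matrix_(a < n + n, b < n + n)
    match fintype.split a, fintype.split b with
    | inr i, inl j => pc x i * expR (- `|qc x i - qc x j|)
    | inr i, inr j => if (i < j)%N then
                        - (Num.sg (qc x i - qc x j) * pc x i * pc x j
                             * expR (- `|qc x i - qc x j|))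
                      else 0
    | inl i, inl j => if (i < j)%N then
                        Num.sg (qc x i - qc x j) * (expR (- `|qc x i - qc x j|) - 1)
                      else 0
    | inl _, inr _ => 0
    end.

Definition P1 : 'M[R]_(n + n) :=
  \matrix_(a < n + n, b < n + n)
    match fintype.split a, fintype.split b with
    | inr i, inl j => if i == j then 1 else 0
    | _, _ => 0
    end.

(* Matrix of the map  alpha |-> P(alpha, .) :  P(alpha,.)_b = sum_a (P^{ab} - P^{ba}) alpha_a,
   using (d_a /\ d_b)(alpha, beta) = alpha_a beta_b - alpha_b beta_a. *)
Definition sharp (P : 'M[R]_(n + n)) : 'M[R]_(n + n) :=
  \matrix_(b < n + n, a < n + n) (P a b - P b a).

Definition recS (x : 'cV[R]_(n + n)) (al : 'cV[R]_(n + n)) : 'cV[R]_(n + n) :=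
  invmx (sharp P1) *m (sharp (P0 x) *m al).

Definition H0 (x : 'cV[R]_(n + n)) : R := \sum_i pc x i.
Definition H1 (x : 'cV[R]_(n + n)) : R :=
  2^-1 * \sum_i \sum_j pc x i * pc x j * expR (- `|qc x i - qc x j|).

Definition ecoord (a : 'I_(n + n)) : 'cV[R]_(n + n) := delta_mx a 0.

Definition dform (H : 'cV[R]_(n + n) -> R) (x : 'cV[R]_(n + n)) : 'cV[R]_(n + n) :=
  \col_a derive1 (fun t : R => H (x + t *: ecoord a)) 0.

Definition is_Ham (i : nat) (H : 'cV[R]_(n + n) -> R) : Prop :=
  match i with
  | 0 => H = H0
  | 1 => H = H1
  | k.+2 => forall x, region x -> forall a : 'I_(n + n),
      is_derive (0 : R) (1 : R) (fun t : R => H (x + t *: ecoord a))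
                ((iter k.+1 (recS x) (dform H1 x)) a 0)
  end.

Definition poly_in_p_deg (d : nat) (H : 'cV[R]_(n + n) -> R) : Prop :=
  exists c : {ffun 'I_n -> 'I_d.+1} -> ('I_n -> R) -> R,
    (forall x, region x ->
       H x = \sum_(al : {ffun 'I_n -> 'I_d.+1} | (\sum_i (al i : nat) <= d)%N)
               c al (qc x) * \prod_i pc x i ^+ al i)
    /\ exists al : {ffun 'I_n -> 'I_d.+1},
         (\sum_i (al i : nat))%N = d /\ exists x, region x /\ c al (qc x) != 0.

End Peakon.

(* Main.v *)
Require Import Defs.
From HB Require Import structures.
From mathcomp Require Import all_boot all_order all_algebra.
From mathcomp Require Import all_classical all_reals all_analysis.
Import Order.TTheory GRing.Theory Num.Theory.
Local Open Scope ring_scope.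
Import numFieldNormedType.Exports.
Set Implicit Arguments. Unset Strict Implicit. Unset Printing Implicit Defensive.
From mathcomp Require Import zify ring lra.

Section PolA.
Variable R : realType.
Variable n : nat.
Local Notation vec := ('I_n -> R).
Local Notation mono := ((vec -> R) * {ffun 'I_n -> nat})%type.

Definition mev (m : {ffun 'I_n -> nat}) (p : vec) : R := \prod_i p i ^+ m i.
Definition evalL (L : seq mono) (q p : vec) : R := \sum_(t <- L) t.1 q * mev t.2 p.
Definition mdeg (m : {ffun 'I_n -> nat}) : nat := (\sum_i m i)%N.
Definition rq (q : vec) := forall i j : 'I_n, i != j -> q i != q j.
Definition Pol (D : nat) (f : vec -> vec -> R) :=
  exists L : seq mono, all (fun t => mdeg t.2 <= D)%N L /\
    forall q p, rq q -> f q p = evalL L q p.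

Lemma Pol_ext D f g : Pol D f -> (forall q p, rq q -> f q p = g q p) -> Pol D g.
Proof. by move=> [L [hL hf]] fg; exists L; split=> // q p hq; rewrite -fg // hf. Qed.

Lemma Pol_le D D' f : (D <= D')%N -> Pol D f -> Pol D' f.
Proof.
move=> le [L [hL hf]]; exists L; split=> //.
by apply: sub_all hL => t /= h; apply: leq_trans h le.
Qed.

Lemma Pol_cst D (g : vec -> R) : Pol D (fun q _ => g q).
Proof.
exists [:: (g, [ffun=> 0%N])]; split.
  by rewrite /= andbT /mdeg big1 // => i _; rewrite ffunE.
move=> q p _; rewrite /evalL big_cons big_nil addr0 /mev big1 ?mulr1 //.
by move=> i _; rewrite ffunE expr0.
Qed.

Lemma Pol0 D : Pol D (fun _ _ => 0).
Proof. exact: (@Pol_cst D (fun _ => 0)). Qed.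

Lemma Pol_add D f g : Pol D f -> Pol D g -> Pol D (fun q p => f q p + g q p).
Proof.
move=> [L1 [h1 e1]] [L2 [h2 e2]]; exists (L1 ++ L2); split; first by rewrite all_cat h1 h2.
by move=> q p hq; rewrite /evalL big_cat /= e1 // e2.
Qed.

Lemma Pol_sumL D (T : Type) (P : pred T) (s : seq T) (F : T -> vec -> vec -> R) :
  all P s -> (forall t, P t -> Pol D (F t)) ->
  Pol D (fun q p => \sum_(t <- s) F t q p).
Proof.
move=> hs hF; elim: s hs => [|t s IH] /=.
  by move=> _; eapply Pol_ext; first exact: (@Pol0 D); move=> q p _; rewrite big_nil.
move=> /andP[Pt Ps]; eapply Pol_ext; first exact: (Pol_add (hF t Pt) (IH Ps)).
by move=> q p _; rewrite big_cons.
Qed.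

Lemma Pol_sum D (I : finType) (F : I -> vec -> vec -> R) :
  (forall i, Pol D (F i)) -> Pol D (fun q p => \sum_i F i q p).
Proof.
move=> hF; apply: (@Pol_sumL D I predT) => //; exact: all_predT.
Qed.

Lemma mevD (m1 m2 : {ffun 'I_n -> nat}) p : mev [ffun i => (m1 i + m2 i)%N] p = mev m1 p * mev m2 p.
Proof.
rewrite /mev -big_split /=; apply: eq_bigr => i _; by rewrite ffunE exprD.
Qed.

Lemma mdegD (m1 m2 : {ffun 'I_n -> nat}) : mdeg [ffun i => (m1 i + m2 i)%N] = (mdeg m1 + mdeg m2)%N.
Proof. by rewrite /mdeg -big_split /=; apply: eq_bigr => i _; rewrite ffunE. Qed.

Lemma Pol_mul a b f g : Pol a f -> Pol b g -> Pol (a + b) (fun q p => f q p * g q p).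
Proof.
move=> [L1 [h1 e1]] [L2 [h2 e2]].
exists [seq ((fun q => t1.1 q * t2.1 q), [ffun i : 'I_n => (t1.2 i + t2.2 i)%N]) | t1 : mono <- L1, t2 : mono <- L2].
split.
  elim: L1 h1 {e1} => //= t1 L1 IH /andP[h1t h1s].
  rewrite all_cat IH // andbT all_map; apply: sub_all h2 => t2 /= h2t.
  by rewrite /= mdegD leq_add.
move=> q p hq; rewrite e1 // e2 // /evalL big_allpairs_dep /= mulr_suml.
apply: eq_bigr => t1 _; rewrite mulr_sumr; apply: eq_bigr => t2 _.
by rewrite mevD /=; rewrite mulrACA.
Qed.

Lemma Pol_mulc D (g : vec -> R) f : Pol D f -> Pol D (fun q p => g q * f q p).
Proof. by move=> hf; apply: (Pol_mul (@Pol_cst 0 g) hf). Qed.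

Lemma Pol_p j : Pol 1 (fun _ p => p j).
Proof.
exists [:: (fun _ => 1, [ffun i => nat_of_bool (i == j)])]; split.
  rewrite /= andbT /mdeg (bigD1 j) //= big1 ?ffunE ?eqxx // => i /negbTE hij.
  by rewrite ffunE hij.
move=> q p _; rewrite /evalL big_cons big_nil addr0 /= mul1r /mev (bigD1 j) //=.
rewrite ffunE eqxx expr1 big1 ?mulr1 // => i /negbTE hij.
by rewrite ffunE hij expr0.
Qed.

Lemma Pol_exp d m f : Pol d f -> Pol (m * d) (fun q p => f q p ^+ m).
Proof.
move=> hf; elim: m => [|m IH].
  by eapply Pol_ext; first exact: (@Pol_cst 0 (fun _ => 1)); move=> q p _; rewrite expr0.
rewrite mulSn; eapply Pol_ext; first exact: (Pol_mul hf IH); move=> q p _; by rewrite exprS.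
Qed.

Lemma Pol_prodL (T : Type) (s : seq T) (d : T -> nat) (F : T -> vec -> vec -> R) :
  (forall t, Pol (d t) (F t)) ->
  Pol (\sum_(t <- s) d t)%N (fun q p => \prod_(t <- s) F t q p).
Proof.
move=> hF; elim: s => [|t s IH].
  by rewrite big_nil; eapply Pol_ext; first exact: (@Pol_cst 0 (fun _ => 1)); move=> q p _; rewrite big_nil.
rewrite big_cons; eapply Pol_ext; first exact: (Pol_mul (hF t) IH); move=> q p _; by rewrite big_cons.
Qed.

End PolA.

Section PartB.
Variable R : realType.
Variable n : nat.
Local Notation vec := ('I_n -> R).
Local Notation cV := 'cV[R]_(n + n).

Lemma split_l (i : 'I_n) : fintype.split (lshift n i) = inl i.
Proof. exact: (unsplitK (inl _ i)). Qed.
Lemma split_r (i : 'I_n) : fintype.split (rshift n i) = inr i.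
Proof. exact: (unsplitK (inr _ i)). Qed.
Lemma split_cases (a : 'I_(n + n)) :
  (exists i, a = lshift n i) \/ (exists i, a = rshift n i).
Proof.
rewrite -(splitK a); case: (fintype.split a) => i; [left|right]; by exists i.
Qed.

Definition mkx (q p : vec) : cV :=
  \col_a (match fintype.split a with inl i => q i | inr i => p i end).
Lemma qc_mkx q p : qc (mkx q p) = q.
Proof. by apply/funext => i; rewrite /qc mxE split_l. Qed.
Lemma pc_mkx q p : pc (mkx q p) = p.
Proof. by apply/funext => i; rewrite /pc mxE split_r. Qed.
Lemma mkxK (x : cV) : mkx (qc x) (pc x) = x.
Proof.
apply/matrixP => a j; rewrite mxE [j]ord1.
by case: (split_cases a) => [[i ->]|[i ->]]; rewrite ?split_l ?split_r.
Qed.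
Lemma region_mkx q p : region (mkx q p) <-> rq q.
Proof. by rewrite /region /= qc_mkx. Qed.

Definition dl (a : 'I_(n + n)) : nat := if fintype.split a is inl _ then 1%N else 0%N.
Lemma dl_le1 a : (dl a <= 1)%N.
Proof. by rewrite /dl; case: (fintype.split a). Qed.

Lemma P0_pol a b : Pol (2 - dl a - dl b) (fun q p => P0 (mkx q p) a b).
Proof.
eapply Pol_ext; last first.
  move=> q p _; rewrite /P0 mxE qc_mkx pc_mkx; reflexivity.
rewrite /dl; case: (fintype.split a) => i; case: (fintype.split b) => j /=.
- case: (i < j)%N; last exact: Pol0.
  eapply Pol_cst.
- exact: Pol0.
- exact: (Pol_mul (Pol_p R i) (@Pol_cst R n 0 (fun q => expR (- `|q i - q j|)))).
- case: (i < j)%N; last exact: Pol0.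
  have h := Pol_mulc (fun q => - (Num.sg (q i - q j) * expR (- `|q i - q j|))) (Pol_mul (Pol_p R i) (Pol_p R j)).
  eapply Pol_ext; first exact: h.
  move=> q p _ /=; ring.
Qed.

Lemma sharpP0_pol b a : Pol (2 - dl b - dl a) (fun q p => sharp (P0 (mkx q p)) b a).
Proof.
have h1 := P0_pol a b; rewrite subnAC in h1.
have h := Pol_add h1 (Pol_mulc (fun _ => -1) (P0_pol b a)).
eapply Pol_ext; first exact: h.
by move=> q p _ /=; rewrite /sharp [RHS]mxE mulN1r.
Qed.

Definition Jm : 'M[R]_(n + n) := \matrix_(c, b)
  match fintype.split c, fintype.split b with
  | inl i, inr j => if i == j then -1 else 0
  | inr i, inl j => if i == j then 1 else 0
  | _, _ => 0
  end.

Lemma sum_ifl (F : 'I_n -> R) (i : 'I_n) (c : R) :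
  \sum_j (if i == j then c else 0) * F j = c * F i.
Proof.
rewrite (bigD1 i) //= eqxx big1 ?addr0 // => j /negbTE.
by rewrite eq_sym => ->; rewrite mul0r.
Qed.

Lemma Jm_inv : Jm *m sharp (P1 R n) = 1%:M.
Proof.
apply/matrixP => c a; rewrite !mxE big_split_ord /=.
case: (split_cases c) => [[i ->]|[i ->]]; case: (split_cases a) => [[k ->]|[k ->]].
- rewrite (eq_bigr (fun j => 0)); last by move=> j _; rewrite !mxE !split_l mul0r.
  rewrite big1 // add0r.
  rewrite (eq_bigr (fun j => (if i == j then -1 else 0) * (- (if j == k then 1 else 0)))).
    by rewrite sum_ifl eq_lshift; case: (i == k); rewrite ?mulN1r ?opprK ?oppr0.
  by move=> j _; rewrite !mxE !split_l !split_r /= sub0r.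
- rewrite (eq_bigr (fun j => 0)); last by move=> j _; rewrite !mxE !split_l mul0r.
  rewrite big1 // add0r big1 ?eq_lrshift //.
  by move=> j _; rewrite !mxE !split_l !split_r /= subrr mulr0.
- rewrite big1 ?add0r.
    by rewrite big1 ?eq_rlshift // => j _; rewrite !mxE !split_l !split_r /= mul0r.
  by move=> j _; rewrite !mxE !split_l !split_r /= subrr mulr0.
- rewrite addrC (eq_bigr (fun j => 0)); last by move=> j _; rewrite !mxE !split_r mul0r.
  rewrite big1 // add0r.
  rewrite (eq_bigr (fun j => (if i == j then 1 else 0) * ((if k == j then 1 else 0)))).
    by rewrite sum_ifl eq_rshift mul1r eq_sym; case: (i == k).
  by move=> j _; rewrite !mxE !split_l !split_r /= subr0.
Qed.

Lemma invS : invmx (sharp (P1 R n)) = Jm.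
Proof.
have [uJ uS] := mulmx1_unit Jm_inv.
by rewrite -[invmx _]mul1mx -Jm_inv -mulmxA mulmxV // mulmx1.
Qed.

Lemma recSE (x al : cV) c :
  recS x al c 0 = \sum_b Jm c b * \sum_a sharp (P0 x) b a * al a 0.
Proof.
rewrite /recS invS !mxE; apply: eq_bigr => b _; by rewrite !mxE.
Qed.

Lemma Jm0 c b : Jm c b = 0 \/ (dl b + dl c = 1)%N.
Proof.
rewrite mxE /dl; case: (fintype.split c) => i; case: (fintype.split b) => j; auto.
Qed.

End PartB.

Section PartC.
Variable R : realType.
Variable n : nat.
Local Notation vec := ('I_n -> R).
Local Notation cV := 'cV[R]_(n + n).

Lemma isd_eq (f g : R -> R) (x d d' : R) :
  f =1 g -> d = d' -> is_derive x 1 f d -> is_derive x 1 g d'.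
Proof. by move=> /funext -> ->. Qed.

Lemma isd_aff (a b x : R) : is_derive x 1 (fun t : R => a + t * b) b.
Proof.
have := is_deriveD (is_derive_cst a x (1:R)) (is_deriveZ b (is_derive_id x (1:R))).
apply: isd_eq => [t|]; last by rewrite add0r /GRing.scale /= mulr1.
by rewrite /= mulrC.
Qed.

Lemma der_cont (f : R -> R) (x : R) : derivable f x 1 -> {for x, continuous f}.
Proof. by move=> df; apply: differentiable_continuous; apply/derivable1_diffP. Qed.

Lemma abs_aff_derivable (a b : R) : a != 0 ->
  derivable (fun t : R => `|a + t * b|) 0 1.
Proof.
move=> a0.
have -> : (fun t : R => `|a + t * b|) =
   (fun t : R => a + t * b) \max (fun t => - (a + t * b)).
  by apply/funext => t /=; rewrite maxrN.
apply: derivable_max.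
- rewrite mul0r addr0 -subr_eq0 opprK -mulr2n mulrn_eq0 negb_or a0 //.
- by case: (isd_aff a b 0).
- by case: (is_deriveN (isd_aff a b 0)).
- apply: der_cont. by case: (isd_aff a b 0).
- apply: der_cont. by case: (is_deriveN (isd_aff a b 0)).
Qed.

Lemma sumfE (m : nat) (h : 'I_m -> R -> R) t :
  (\sum_(i < m) h i) t = \sum_(i < m) h i t.
Proof. by elim/big_rec2: _ => // i f r _ <-. Qed.

Lemma isd_H1 (u : 'I_n -> R -> R) (w : 'I_n -> 'I_n -> R -> R)
    (du : 'I_n -> R) (dw : 'I_n -> 'I_n -> R) :
  (forall i, is_derive (0:R) 1 (u i) (du i)) ->
  (forall i j, is_derive (0:R) 1 (w i j) (dw i j)) ->
  is_derive (0:R) 1 (fun t => 2^-1 * \sum_i \sum_j u i t * u j t * w i j t)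
    (2^-1 * \sum_i \sum_j (u i 0 * u j 0 * dw i j
                            + w i j 0 * (u i 0 * du j + u j 0 * du i))).
Proof.
move=> hu hw.
have hij : forall i j, is_derive (0:R) 1 (fun t => u i t * u j t * w i j t)
   (u i 0 * u j 0 * dw i j + w i j 0 * (u i 0 * du j + u j 0 * du i)).
  move=> i j; apply: isd_eq (is_deriveM (is_deriveM (hu i) (hu j)) (hw i j)) => [t //|].
  have -> : (u i * u j) 0 = u i 0 * u j 0 by [].
  rewrite /GRing.scale /=; ring.
have := is_deriveZ (2^-1) (is_derive_sum (fun i => is_derive_sum (hij i))).
apply: isd_eq => [t|]; last by rewrite /GRing.scale /=.
by rewrite /= !sumfE; congr (_ * _); apply: eq_bigr => i _; rewrite sumfE.
Qed.

Lemma qc_shift (x : cV) t c i :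
  qc (x + t *: ecoord R c) i = qc x i + t * (lshift n i == c)%:R.
Proof. by rewrite /qc /ecoord !mxE eqxx andbT. Qed.
Lemma pc_shift (x : cV) t c i :
  pc (x + t *: ecoord R c) i = pc x i + t * (rshift n i == c)%:R.
Proof. by rewrite /pc /ecoord !mxE eqxx andbT. Qed.

Definition Wf (q : vec) c i j (t : R) : R :=
  expR (- `|(q i + t * (lshift n i == c)%:R) - (q j + t * (lshift n j == c)%:R)|).

Lemma Wf_derivable q c i j : rq q -> derivable (Wf q c i j) 0 1.
Proof.
move=> hq.
pose g := fun t : R => - `|(q i - q j) + t * ((lshift n i == c)%:R - (lshift n j == c)%:R)|.
have -> : Wf q c i j = expR \o g.
  apply/funext => t; rewrite /Wf /g /=; congr (expR (- `|_|)); ring.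
suff hd : derivable g 0 1.
  by case: (is_derive1_comp (is_derive_expR (g 0)) (derivableP hd)).
have [eij|ij] := eqVneq i j.
  have -> : g = cst 0.
    by apply/funext => t; rewrite /g eij !subrr mulr0 addr0 normr0 oppr0.
  by case: (is_derive_cst (0:R) (0:R) (1:R)).
have h : derivable (fun t : R => `|(q i - q j) + t * ((lshift n i == c)%:R - (lshift n j == c)%:R)|) 0 1.
  by apply: abs_aff_derivable; rewrite subr_eq0; apply: hq.
by case: (is_deriveN (derivableP h)).
Qed.

Lemma Wf0 q c i j : Wf q c i j 0 = expR (- `|q i - q j|).
Proof. by rewrite /Wf !mul0r !addr0. Qed.

Lemma Wf_r q k i j : Wf q (rshift n k) i j = cst (expR (- `|q i - q j|)).
Proof. by apply/funext => t; rewrite /Wf !eq_lrshift !mulr0 !addr0. Qed.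

Lemma dformH1E (q p : vec) c : rq q ->
  dform (@H1 R n) (mkx q p) c 0 =
  2^-1 * \sum_i \sum_j (p i * p j * 'D_1 (Wf q c i j) 0
       + Wf q c i j 0 * (p i * (rshift n j == c)%:R + p j * (rshift n i == c)%:R)).
Proof.
move=> hq; rewrite /dform mxE derive1E.
have hd := isd_H1 (fun i => isd_aff (p i) ((rshift n i == c)%:R) 0)
   (fun i j => derivableP (@Wf_derivable q c i j hq)).
have -> : (fun t => H1 (mkx q p + t *: ecoord R c)) =
   (fun t => 2^-1 * \sum_i \sum_j (p i + t * (rshift n i == c)%:R) *
       (p j + t * (rshift n j == c)%:R) * Wf q c i j t).
  apply/funext => t; rewrite /H1; congr (_ * _); apply: eq_bigr => i _.
  apply: eq_bigr => j _.
  by rewrite !pc_shift !qc_shift qc_mkx pc_mkx.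
rewrite (@derive_val _ _ _ _ _ _ _ hd); congr (_ * _).
by apply: eq_bigr => i _; apply: eq_bigr => j _; rewrite !mul0r !addr0.
Qed.
Lemma dform_pol c : Pol (1 + dl c) (fun q p => dform (@H1 R n) (mkx q p) c 0).
Proof.
case: (split_cases c) => [[k ->]|[k ->]]; rewrite /dl ?split_l ?split_r /=.
- apply: (Pol_ext (f := fun q p => 2^-1 * \sum_i \sum_j (p i * p j * 'D_1 (Wf q (lshift n k) i j) 0
       + Wf q (lshift n k) i j 0 * (p i * (rshift n j == lshift n k)%:R + p j * (rshift n i == lshift n k)%:R)))); last first.
    by move=> q p hq; rewrite dformH1E.
  apply: (Pol_mulc (fun _ => 2^-1)); apply: Pol_sum => i; apply: Pol_sum => j.
  apply: Pol_add.
    exact: (Pol_mul (Pol_mul (Pol_p R i) (Pol_p R j)) (@Pol_cst R n 0 (fun q => 'D_1 (Wf q (lshift n k) i j) 0))).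
  apply: (@Pol_le R n 1); first done.
  apply: (Pol_mulc (fun q => Wf q (lshift n k) i j 0)).
  apply: Pol_add.
    exact: (Pol_mul (Pol_p R i) (@Pol_cst R n 0 (fun _ => (rshift n j == lshift n k)%:R))).
  exact: (Pol_mul (Pol_p R j) (@Pol_cst R n 0 (fun _ => (rshift n i == lshift n k)%:R))).
- apply: (Pol_ext (f := fun q p => 2^-1 * \sum_i \sum_j (
       Wf q (rshift n k) i j 0 * (p i * (rshift n j == rshift n k)%:R + p j * (rshift n i == rshift n k)%:R)))); last first.
    move=> q p hq; rewrite dformH1E //; congr (_ * _); apply: eq_bigr => i _; apply: eq_bigr => j _.
    by rewrite Wf_r derive_cst mulr0 add0r.
  apply: (Pol_mulc (fun _ => 2^-1)); apply: Pol_sum => i; apply: Pol_sum => j.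
  apply: (Pol_mulc (fun q => Wf q (rshift n k) i j 0)).
  apply: Pol_add.
    exact: (Pol_mul (Pol_p R i) (@Pol_cst R n 0 (fun _ => (rshift n j == rshift n k)%:R))).
  exact: (Pol_mul (Pol_p R j) (@Pol_cst R n 0 (fun _ => (rshift n i == rshift n k)%:R))).
Qed.

Definition pe (a : 'I_n) (s : R) : vec := fun i => if i == a then s else 0.

Lemma sum_pe (F : 'I_n -> R) a s : \sum_i pe a s i * F i = s * F a.
Proof.
rewrite (bigD1 a) //= /pe eqxx big1 ?addr0 // => i /negbTE ->; by rewrite mul0r.
Qed.

Lemma sum_eqr (F : 'I_n -> R) a : \sum_i F i * (i == a)%:R = F a.
Proof.
rewrite (bigD1 a) //= eqxx mulr1 big1 ?addr0 // => i /negbTE ->; by rewrite mulr0.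
Qed.

Lemma dform_line_q q a s k : rq q ->
  dform (@H1 R n) (mkx q (pe a s)) (lshift n k) 0 = 0.
Proof.
move=> hq; rewrite dformH1E //.
rewrite (eq_bigr (fun i => pe a s i * \sum_j pe a s j * 'D_1 (Wf q (lshift n k) i j) 0)); last first.
  move=> i _; rewrite mulr_sumr; apply: eq_bigr => j _.
  by rewrite !eq_rlshift mulr0 mulr0 addr0 mulr0 addr0 mulrA.
rewrite sum_pe sum_pe.
have -> : Wf q (lshift n k) a a = cst 1.
  by apply/funext => t; rewrite /Wf subrr normr0 oppr0 expR0.
by rewrite derive_cst !mulr0.
Qed.

Lemma dform_line_p q a s : rq q ->
  dform (@H1 R n) (mkx q (pe a s)) (rshift n a) 0 = s.
Proof.
move=> hq; rewrite dformH1E //.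
rewrite (eq_bigr (fun i => \sum_j (pe a s i * Wf q (rshift n a) i j 0 * (j == a)%:R
     + pe a s j * Wf q (rshift n a) i j 0 * (i == a)%:R))); last first.
  move=> i _; apply: eq_bigr => j _.
  rewrite Wf_r derive_cst mulr0 add0r !eq_rshift /cst /=; ring.
rewrite (eq_bigr (fun i => pe a s i * Wf q (rshift n a) i a 0
    + (\sum_j pe a s j * Wf q (rshift n a) i j 0) * (i == a)%:R)); last first.
  by move=> i _; rewrite big_split /= sum_eqr -mulr_suml.
rewrite big_split /= sum_pe sum_eqr sum_pe !Wf0 subrr normr0 oppr0 expR0.
by field.
Qed.
End PartC.

Section PartD.
Variable R : realType.
Variable n : nat.
Local Notation vec := ('I_n -> R).
Local Notation cV := 'cV[R]_(n + n).

Lemma iter_pol k c :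
  Pol (k.+1 + dl c) (fun q p => iter k (recS (mkx q p)) (dform (@H1 R n) (mkx q p)) c 0).
Proof.
elim: k c => [|k IH] c; first exact: dform_pol.
eapply Pol_ext; last by move=> q p _; rewrite iterS recSE; reflexivity.
apply: Pol_sum => b.
case: (Jm0 R c b) => [J0|Jb].
  eapply Pol_ext; first exact: Pol0.
  by move=> q p _; rewrite /= J0 mul0r.
apply: (Pol_mulc (fun _ => Jm R n c b)).
apply: Pol_sum => a.
apply: Pol_le (Pol_mul (sharpP0_pol R b a) (IH a)).
have := dl_le1 a; have := dl_le1 b; have := dl_le1 c; lia.
Qed.

Lemma recS_ls (x al : cV) j :
  recS x al (lshift n j) 0 = - \sum_a sharp (P0 x) (rshift n j) a * al a 0.
Proof.
rewrite recSE big_split_ord /= big1 ?add0r; last first.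
  by move=> i _; rewrite !mxE !split_l mul0r.
rewrite (eq_bigr (fun i => (if j == i then -1 else 0) * \sum_a sharp (P0 x) (rshift n i) a * al a 0)).
  by rewrite sum_ifl mulN1r.
by move=> i _; rewrite [Jm _ _ _ _]mxE split_l split_r.
Qed.

Lemma recS_rs (x al : cV) j :
  recS x al (rshift n j) 0 = \sum_a sharp (P0 x) (lshift n j) a * al a 0.
Proof.
rewrite recSE big_split_ord /= [X in _ + X]big1 ?addr0; last first.
  by move=> i _; rewrite !mxE !split_r mul0r.
rewrite (eq_bigr (fun i => (if j == i then 1 else 0) * \sum_a sharp (P0 x) (lshift n i) a * al a 0)).
  by rewrite sum_ifl mul1r.
by move=> i _; rewrite [Jm _ _ _ _]mxE split_l split_r.
Qed.

Lemma pe_mul0 (a : 'I_n) (s : R) i j : i != j -> pe a s i * pe a s j = 0.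
Proof.
rewrite /pe; case: (i =P a) => [->|_]; last by rewrite mul0r.
by rewrite eq_sym => /negbTE ->; rewrite mulr0.
Qed.

Lemma P0rr0 (q : vec) (a : 'I_n) (s : R) i j : P0 (mkx q (pe a s)) (rshift n i) (rshift n j) = 0.
Proof.
rewrite mxE !split_r qc_mkx pc_mkx.
case: ltnP => h //.
have ij : i != j by rewrite neq_ltn h.
by rewrite -(mulrA (Num.sg _)) pe_mul0 // mulr0 mul0r oppr0.
Qed.

Lemma iter_line (q : vec) (a : 'I_n) (s : R) k : rq q ->
  (forall j, iter k (recS (mkx q (pe a s))) (dform (@H1 R n) (mkx q (pe a s))) (lshift n j) 0 = 0)
  /\ iter k (recS (mkx q (pe a s))) (dform (@H1 R n) (mkx q (pe a s))) (rshift n a) 0 = s ^+ k.+1.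
Proof.
move=> hq; elim: k => [|k [IH1 IH2]].
  by split=> [j|]; rewrite /= ?dform_line_q ?dform_line_p ?expr1.
split=> [j|].
  rewrite iterS recS_ls big_split_ord /=.
  rewrite [X in X + _]big1 => [|i _]; last by rewrite IH1 mulr0.
  rewrite add0r big1 ?oppr0 // => i _.
  by rewrite /sharp mxE !P0rr0 subrr mul0r.
rewrite iterS recS_rs big_split_ord /= big1 ?add0r; last first.
  by move=> i _; rewrite IH1 mulr0.
rewrite (eq_bigr (fun i => pe a s i * (expR (- `|q i - q a|) *
     iter k (recS (mkx q (pe a s))) (dform (@H1 R n) (mkx q (pe a s))) (rshift n i) 0))).
  by rewrite sum_pe IH2 subrr normr0 oppr0 expR0 mul1r -exprS.
move=> i _; rewrite /sharp mxE [P0 _ (rshift n i) _]mxE [P0 _ (lshift n a) _]mxE.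
by rewrite split_l split_r qc_mkx pc_mkx subr0 mulrA.
Qed.

End PartD.

Section PartE.
Variable R : realType.
Variable n : nat.
Local Notation vec := ('I_n -> R).

Lemma isd_shift (g : R -> R) (s d : R) :
  is_derive (0:R) 1 (fun t => g (s + t)) d -> is_derive s 1 g d.
Proof.
move=> h.
have hi : is_derive s 1 (fun u : R => (- s) + u * 1) 1 := isd_aff (- s) 1 s.
have h' : is_derive ((fun u : R => (- s) + u * 1) s) 1 (fun t => g (s + t)) d.
  by rewrite /= mulr1 addNr.
have := @is_derive1_comp R (fun t => g (s + t)) (fun u : R => - s + u * 1) s d 1 h' hi.
apply: isd_eq => [u|]; last by rewrite mulr1.
by rewrite /= mulr1 addrA subrr add0r.
Qed.

Lemma isd_cst_diff (g G dg : R -> R) :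
  (forall s : R, is_derive s 1 g (dg s)) -> (forall s : R, is_derive s 1 G (dg s)) ->
  forall t, g t - G t = g 0 - G 0.
Proof.
move=> hg hG t.
apply: (@is_derive_0_is_cst R (fun s => g s - G s)) => s.
by apply: isd_eq (is_deriveB (hg s) (hG s)) => [u //|]; rewrite subrr.
Qed.

Lemma isd_mono (c : R) (m : nat) (s : R) :
  is_derive s 1 (fun u => c * (u ^+ m.+1 / m.+1%:R)) (c * s ^+ m).
Proof.
have := is_deriveZ (c / m.+1%:R) (is_deriveX m.+1 (is_derive_id s (1:R))).
apply: isd_eq => [u|].
  by rewrite /= exprfctE /GRing.scale /= mulrA mulrAC.
rewrite /GRing.scale /= mulr1.
have hm : m.+1%:R != 0 :> R by rewrite pnatr_eq0.
by field.
Qed.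

Lemma isd_sumL (T : Type) (L : seq T) (f : T -> R -> R) (df : T -> R) (s : R) :
  (forall t, is_derive s 1 (f t) (df t)) ->
  is_derive s 1 (fun u => \sum_(t <- L) f t u) (\sum_(t <- L) df t).
Proof.
move=> h; elim: L => [|t L IH].
  by apply: isd_eq (is_derive_cst (0:R) s 1) => [u|]; rewrite big_nil.
by apply: isd_eq (is_deriveD (h t) IH) => [u|]; rewrite big_cons.
Qed.

Lemma Pol_prodLP (T : Type) (P : pred T) (s : seq T) (d : T -> nat)
    (F : T -> vec -> vec -> R) :
  (forall t, P t -> Pol (d t) (F t)) ->
  Pol (\sum_(t <- s | P t) d t)%N (fun q p => \prod_(t <- s | P t) F t q p).
Proof.
move=> hF; elim: s => [|t s IH].
  rewrite big_nil; eapply Pol_ext; first exact: (@Pol_cst R n 0 (fun _ => 1)).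
  by move=> q p _; rewrite big_nil.
rewrite big_cons; case Pt: (P t).
  eapply Pol_ext; first exact: (Pol_mul (hF t Pt) IH).
  by move=> q p _; rewrite big_cons Pt.
eapply Pol_ext; first exact: IH.
by move=> q p _; rewrite big_cons Pt.
Qed.

Definition tr (k : nat) (p : vec) : vec := fun i => if (i < k)%N then p i else 0.
Definition upd (p : vec) (a : 'I_n) (t : R) : vec := fun i => p i + t * (i == a)%:R.

Lemma sweep D (F : vec -> vec -> R) (A : 'I_n -> vec -> vec -> R) :
  (forall a, Pol D (A a)) ->
  (forall q p a, rq q -> is_derive (0:R) 1 (fun t => F q (upd p a t)) (A a q p)) ->
  Pol D.+1 F.
Proof.
move=> hA hF.
suff H : forall k, (k <= n)%N -> Pol D.+1 (fun q p => F q (tr k p)).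
  eapply Pol_ext; first exact: (H n (leqnn n)).
  by move=> q p _; congr (F q _); apply/funext => i; rewrite /tr ltn_ord.
elim=> [|k IH] hk.
  eapply Pol_ext; first exact: (@Pol_cst R n D.+1 (fun q => F q (fun _ => 0))).
  by move=> q p _; congr (F q _); apply/funext => i; rewrite /tr.
pose kk : 'I_n := Ordinal hk.
have [L [hL eL]] := hA kk.
pose G (q p : vec) (u : R) := \sum_(t <- L) (t.1 q * \prod_(i | i != kk) tr k p i ^+ t.2 i)
   * (u ^+ (t.2 kk).+1 / (t.2 kk).+1%:R).
have trkk : forall p, tr k p kk = 0 by move=> p; rewrite /tr /= ltnn.
have key : forall q p, rq q -> F q (tr k.+1 p) = F q (tr k p) + G q p (p kk).
  move=> q p hq.
  pose g u := F q (upd (tr k p) kk u).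
  have hg : forall u : R, is_derive u 1 g (A kk q (upd (tr k p) kk u)).
    move=> u; apply: isd_shift.
    apply: isd_eq (hF q (upd (tr k p) kk u) kk hq) => [t|//].
    by rewrite /g; congr (F q _); apply/funext => i; rewrite /upd mulrDl addrA.
  have hG : forall u : R, is_derive u 1 (G q p) (A kk q (upd (tr k p) kk u)).
    move=> u; rewrite eL // /evalL.
    apply: isd_sumL => t.
    apply: isd_eq (isd_mono (t.1 q * \prod_(i | i != kk) tr k p i ^+ t.2 i) (t.2 kk) u) => [v //|].
    rewrite /mev [in RHS](bigD1 kk) //= {1}/upd eqxx mulr1 trkk add0r.
    rewrite [in RHS](eq_bigr (fun i => tr k p i ^+ t.2 i)); first by ring.
    by move=> i /negbTE hi; rewrite /upd hi mulr0 addr0.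
  have := isd_cst_diff hg hG (p kk).
  have -> : G q p 0 = 0.
    by rewrite /G big1 // => t _; rewrite expr0n /= mul0r mulr0.
  have -> : g 0 = F q (tr k p).
    by rewrite /g; congr (F q _); apply/funext => i; rewrite /upd mul0r addr0.
  have -> : g (p kk) = F q (tr k.+1 p).
    rewrite /g; congr (F q _); apply/funext => i; rewrite /upd /tr.
    have ik : (i == kk) = (val i == k) by [].
    rewrite ik ltnS; case: ltngtP => h.
    - by rewrite mulr0 addr0.
    - by rewrite mulr0 addr0.
    - by rewrite mulr1 add0r; congr p; apply: val_inj.
  by rewrite subr0 => /eqP; rewrite subr_eq => /eqP ->; rewrite addrC.
have GP : Pol D.+1 (fun q p => G q p (p kk)).
  apply: (@Pol_sumL R n D.+1 _ (fun t => mdeg t.2 <= D)%N) => // t ht.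
  have h1 : Pol (\sum_(i | i != kk) t.2 i)%N (fun q p => \prod_(i | i != kk) tr k p i ^+ t.2 i).
    apply: (@Pol_prodLP 'I_n (fun i => i != kk) (index_enum _) (fun i => t.2 i) (fun i q p => tr k p i ^+ t.2 i)).
    move=> i _; rewrite /tr; case: (i < k)%N.
      by have := Pol_exp (t.2 i) (Pol_p R i); rewrite muln1.
    exact: (@Pol_cst R n _ (fun _ => 0 ^+ t.2 i)).
  have h2 := Pol_mul (Pol_mulc (fun q => t.1 q) h1)
     (Pol_mul (Pol_exp (t.2 kk).+1 (Pol_p R kk)) (@Pol_cst R n 0 (fun _ => (t.2 kk).+1%:R^-1))).
  apply: (Pol_le _ h2).
  by move: ht; rewrite /mdeg (bigD1 kk) //=; lia.
eapply Pol_ext; first exact: (Pol_add (IH (ltnW hk)) GP).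
by move=> q p hq; rewrite key.
Qed.

End PartE.

Section PartF.
Variable R : realType.
Variable n : nat.
Local Notation vec := ('I_n -> R).
Local Notation mono := ((vec -> R) * {ffun 'I_n -> nat})%type.

Lemma nat_le_mdeg (m : {ffun 'I_n -> nat}) i : (m i <= mdeg m)%N.
Proof. by rewrite /mdeg (bigD1 i) //= leq_addr. Qed.

Section Fix.
Variable D : nat.
Definition tonat (al : {ffun 'I_n -> 'I_D.+1}) : {ffun 'I_n -> nat} := [ffun i => (al i : nat)].
Definition coefL (L : seq mono) (al : {ffun 'I_n -> 'I_D.+1}) (q : vec) : R :=
  \sum_(t <- L) (if t.2 == tonat al then t.1 q else 0).

Lemma tonat_inj : injective tonat.
Proof.
move=> a1 a2 e; apply/ffunP => i; apply: val_inj.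
by have := congr1 (fun f : {ffun 'I_n -> nat} => f i) e; rewrite /= !ffunE.
Qed.

Lemma term_eq (t : mono) (q p : vec) : (mdeg t.2 <= D)%N ->
  \sum_(al : {ffun 'I_n -> 'I_D.+1} | (\sum_i (al i : nat) <= D)%N)
     (if t.2 == tonat al then t.1 q else 0) * \prod_i p i ^+ al i
  = t.1 q * mev t.2 p.
Proof.
move=> ht.
pose al0 : {ffun 'I_n -> 'I_D.+1} := [ffun i => inord (t.2 i)].
have e0 : tonat al0 = t.2.
  apply/ffunP => i; rewrite !ffunE inordK // ltnS.
  exact: leq_trans (nat_le_mdeg t.2 i) ht.
have s0 : (\sum_i (al0 i : nat) <= D)%N.
  rewrite (eq_bigr (fun i => tonat al0 i)) => [|i _]; last by rewrite /tonat [in RHS]ffunE.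
  have -> : (\sum_i tonat al0 i = mdeg (tonat al0))%N by [].
  by rewrite e0.
rewrite (bigD1 al0) //= -e0 eqxx [X in _ + X]big1 ?addr0.
  by congr (_ * _); rewrite /mev; apply: eq_bigr => i _; rewrite /tonat [in RHS]ffunE.
move=> al /andP[_ ne]; case: eqP => [e|_]; last by rewrite mul0r.
by move: ne; rewrite (tonat_inj e) eqxx.
Qed.

Lemma evalL_conv (L : seq mono) (q p : vec) : all (fun t => mdeg t.2 <= D)%N L ->
  evalL L q p = \sum_(al : {ffun 'I_n -> 'I_D.+1} | (\sum_i (al i : nat) <= D)%N)
                  coefL L al q * \prod_i p i ^+ al i.
Proof.
move=> hL; rewrite /coefL.
under [RHS]eq_bigr do rewrite mulr_suml.
rewrite [RHS]exchange_big /= /evalL.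
elim: L hL => [|t L IH] /=; first by rewrite !big_nil.
move=> /andP[ht hL]; rewrite !big_cons IH // term_eq //.
Qed.
End Fix.

Lemma poly_zero (P : {poly R}) : (forall s, P.[s] = 0) -> P = 0.
Proof.
move=> h; apply: (@roots_geq_poly_eq0 _ _ [seq i%:R | i <- iota 0 (size P)]).
- by apply/allP => x /mapP [i _ ->]; rewrite /root h.
- rewrite map_inj_uniq ?iota_uniq // => i j /eqP; rewrite eqr_nat => /eqP //.
- by rewrite size_map size_iota.
Qed.

End PartF.

Section PartG.
Variable R : realType.
Variable n : nat.
Local Notation vec := ('I_n -> R).

Lemma mkx_shift (q p : vec) (t : R) b :
  mkx q p + t *: ecoord R (rshift n b) = mkx q (upd p b t).
Proof.
apply/matrixP => c j; rewrite [j]ord1 !mxE.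
case: (split_cases c) => [[i ->]|[i ->]]; rewrite ?split_l ?split_r /upd.
  by rewrite eq_lrshift /= mulr0 addr0.
by rewrite eq_rshift eqxx andbT.
Qed.

Lemma final D (H : 'cV[R]_(n + n) -> R) (q0 : vec) (a : 'I_n) (k h0 : R) :
  (0 < D)%N -> Pol D (fun q p => H (mkx q p)) -> rq q0 -> k != 0 ->
  (forall s, H (mkx q0 (pe a s)) = h0 + k * s ^+ D) ->
  poly_in_p_deg D H.
Proof.
move=> D0 [L [hL eL]] hq0 k0 hline.
have conv : forall x, region x -> H x = \sum_(al : {ffun 'I_n -> 'I_D.+1} | (\sum_i (al i : nat) <= D)%N)
     coefL L al (qc x) * \prod_i pc x i ^+ al i.
  move=> x hx; rewrite -{1}(mkxK x) eL; first exact: evalL_conv.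
  by apply/(region_mkx (qc x) (pc x)); rewrite mkxK.
exists (coefL L); split; first exact: conv.
case: (pselect (exists al : {ffun 'I_n -> 'I_D.+1}, (\sum_i (al i : nat))%N = D /\
   exists x, region x /\ coefL L al (qc x) != 0)) => // Hno; exfalso.
have Hz : forall al : {ffun 'I_n -> 'I_D.+1}, (\sum_i (al i : nat))%N = D -> coefL L al q0 = 0.
  move=> al hs; apply/eqP/negPn/negP => hne; apply: Hno; exists al; split=> //.
  exists (mkx q0 (fun _ => 0)); rewrite qc_mkx; split=> //; exact/region_mkx.
pose supp (al : {ffun 'I_n -> 'I_D.+1}) : bool := [forall i, (i != a) ==> ((al i : nat) == 0%N)].
pose P : {poly R} := \sum_(al : {ffun 'I_n -> 'I_D.+1} | (\sum_i (al i : nat) <= D)%N)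
    (coefL L al q0 * (supp al)%:R) *: 'X^(al a) - (k *: 'X^D + h0%:P).
have HP : P = 0.
  apply: poly_zero => s.
  rewrite /P hornerD hornerN hornerD hornerZ hornerXn hornerC horner_sum.
  rewrite (addrC (k * _)) -hline conv; last by apply/region_mkx.
  rewrite qc_mkx pc_mkx; apply/eqP; rewrite subr_eq0; apply/eqP; apply: eq_bigr => al _.
  rewrite hornerZ hornerXn -mulrA; congr (_ * _).
  rewrite [RHS](bigD1 a) //= {1}/pe eqxx.
  case: (boolP (supp al)) => hs /=.
    rewrite mul1r big1 ?mulr1 // => i ia.
    by move/forallP: hs => /(_ i); rewrite ia /= => /eqP ->; rewrite expr0.
  move/forallPn: hs => [i]; rewrite negb_imply => /andP[ia ai].
  rewrite mul0r (bigD1 i) //= {1}/pe (negbTE ia) expr0n.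
  by move: ai; case: (al i : nat) => //= _; rewrite mul0r mulr0.
have := congr1 (fun P : {poly R} => P`_D) HP.
rewrite /P coefB coefD coefZ coefXn eqxx mulr1 coefC.
have -> : (D == 0%N) = false by case: D D0 {hL Hz HP P supp conv hline eL Hno}.
rewrite addr0 coef0 coef_sum big1 ?sub0r.
  by move/eqP; rewrite oppr_eq0 (negbTE k0).
move=> al hal; rewrite coefZ coefXn.
case: (boolP (supp al)) => hs; last by rewrite mulr0 mul0r.
case: (D =P al a) => [e|_]; last by rewrite mulr0.
rewrite Hz ?mul0r //.
rewrite (bigD1 a) //= big1 ?addn0 // => i ia.
by move/forallP: hs => /(_ i); rewrite ia /= => /eqP.
Qed.

End PartG.

Theorem corollary1 (R : realType) (n : nat) (hn : (1 <= n)%N)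
  (i : nat) (H : 'cV[R]_(n + n) -> R) :
  is_Ham i H -> poly_in_p_deg i.+1 H.
Proof.
pose q0 : 'I_n -> R := fun j => (j : nat)%:R.
have hq0 : rq q0.
  by move=> j l jl; rewrite /q0 eqr_nat.
pose a : 'I_n := Ordinal hn.
case: i => [|[|k]] /= hH.
- rewrite hH; apply: (@final R n 1 _ q0 a 1 0 erefl _ hq0 (oner_neq0 R)).
  + eapply Pol_ext; first exact: (Pol_sum (fun j => Pol_p R j)).
    by move=> q p _; rewrite /H0 pc_mkx.
  + move=> s; rewrite /H0 pc_mkx add0r mul1r expr1.
    rewrite (bigD1 a) //= /pe eqxx big1 ?addr0 // => j /negbTE ->.
    done.
- have k0 : (2^-1 : R) != 0 by rewrite invr_eq0 pnatr_eq0.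
  rewrite hH; apply: (@final R n 2 _ q0 a (2^-1) 0 erefl _ hq0 k0).
  + eapply Pol_ext.
      apply: (Pol_mulc (fun _ => 2^-1)); apply: Pol_sum => j; apply: Pol_sum => l.
      exact: (Pol_mul (Pol_mul (Pol_p R j) (Pol_p R l)) (@Pol_cst R n 0 (fun q => expR (- `|q j - q l|)))).
    by move=> q p _; rewrite /H1 pc_mkx qc_mkx.
  + move=> s; rewrite /H1 pc_mkx qc_mkx add0r.
    rewrite (eq_bigr (fun j => pe a s j * \sum_l pe a s l * expR (- `|q0 j - q0 l|))); last first.
      by move=> j _; rewrite mulr_sumr; apply: eq_bigr => l _; rewrite mulrA.
    rewrite sum_pe sum_pe subrr normr0 oppr0 expR0 mulr1.
    by rewrite expr2.
- have hP : Pol k.+3 (fun q p => H (mkx q p)).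
    apply: (sweep (A := fun b q p => iter k.+1 (recS (mkx q p)) (dform (@H1 R n) (mkx q p)) (rshift n b) 0)).
    + move=> b; have := iter_pol R k.+1 (rshift n b).
      by rewrite /dl split_r addn0.
    + move=> q p b hq.
      have := hH (mkx q p) (proj2 (region_mkx q p) hq) (rshift n b).
      by apply: isd_eq => [t|//]; rewrite mkx_shift.
  pose g (u : R) := H (mkx q0 (pe a u)).
  pose G (u : R) := 1 * (u ^+ k.+3 / k.+3%:R).
  have hg : forall u : R, is_derive u 1 g (u ^+ k.+2).
    move=> u; apply: isd_shift.
    have := hH (mkx q0 (pe a u)) (proj2 (region_mkx _ _) hq0) (rshift n a).
    apply: isd_eq => [t|].
      rewrite mkx_shift /g; congr (H (mkx q0 _)); apply/funext => j.
      by rewrite /upd /pe; case: (j == a); rewrite ?mulr1 ?mulr0 ?addr0 ?add0r.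
    by have [_ ->] := iter_line a u k.+1 hq0.
  have hG : forall u : R, is_derive u 1 G (u ^+ k.+2).
    by move=> u; apply: isd_eq (isd_mono 1 k.+2 u) => [v //|]; rewrite mul1r.
  have k0 : (k.+3%:R^-1 : R) != 0 by rewrite invr_eq0 pnatr_eq0.
  apply: (@final R n k.+3 _ q0 a (k.+3%:R^-1) (g 0) erefl hP hq0 k0).
  move=> s; have := isd_cst_diff hg hG s.
  have -> : G 0 = 0 by rewrite /G expr0n /= mul0r mulr0.
  rewrite subr0 => /eqP; rewrite subr_eq => /eqP e.
  by rewrite -/(g s) e /G mul1r mulrC.
Qed.
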